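(* Consider an $L$-layer ADMM-CSNet with initial weights $(W_{10}^l)_{i,j}\sim\mathcal N(0,1)$, $(W_{20}^l)_{i,j}\sim\mathcal N(0,1)$ i.i.d., $l\in[L]$, and suppose $\|W_{20}^l\|\le c_{20}\sqrt m$ for all $l$ with $c_{20}=3$. Then for any $\mathbf W_1,\mathbf W_2$ with $\|\mathbf W_1-\mathbf W_{10}\|\le R_1$, $\|\mathbf W_2-\mathbf W_{20}\|\le R_2$ and any $s\in[m]$, $$\|\mathbf b_s^l\|\le L_\sigma^{L-l}\big(2(c_{20}+R_2/\sqrt m)+1\big)^{L-l},\quad l\in[L],$$ and at initialization ($R_2=0$), $\|\mathbf b^l_{s,0}\|\le L_\sigma^{L-l}(2c_{20}+1)^{L-l}$.
   Context: Fix $\lambda>0$ and $\sigma(x)=\log(1+e^{x-\lambda})-\log(1+e^{-x-\lambda})$ (componentwise), $|\sigma'|\le L_\sigma$. ADMM-CSNet: input $\mathbf y\in\mathbb R^n$, initial $\mathbf z^0,\mathbf u^0\in\mathbb R^m$; $\mathbf x^l=\frac1{\sqrt n}W_1^l\mathbf y+\frac1{\sqrt m}W_2^l(\mathbf z^{l-1}-\mathbf u^{l-1})$, $\mathbf z^l=\sigma(\mathbf x^l+\mathbf u^{l-1})$, $\mathbf u^l=\mathbf u^{l-1}+\mathbf x^l-\mathbf z^l$, output $\mathbf f=\frac1{\sqrt m}\mathbf z^L$, $f_s$ its $s$-th entry. $\mathbf b_s^l=\partial f_s/\partial\mathbf z^l$ (total derivative through the recursion), $\mathbf b^l_{s,0}$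 the same at the initial weights. $\mathbf W_1=(W_1^l)_l$, $\mathbf W_2=(W_2^l)_l$; weight distances are Frobenius norms over all entries. $\|\cdot\|$ is the Euclidean norm for vectors, spectral norm for matrices. *)

(* Defs.v *)
From HB Require Import structures.
From mathcomp Require Import all_boot all_order all_algebra.
From mathcomp Require Import all_classical all_reals all_analysis.
Set Implicit Arguments. Unset Strict Implicit. Unset Printing Implicit Defensive.
Import Order.TTheory GRing.Theory Num.Theory.
Import numFieldNormedType.Exports.
Local Open Scope classical_set_scope.
Local Open Scope ring_scope.

Section ADMM.
Variable R : realType.

Definition frob (p q : nat) (A : 'M[R]_(p, q)) : R :=
  Num.sqrt (\sum_(i < p) \sum_(j < q) (A i j) ^+ 2).

Definition enorm (p : nat) (v : 'cV[R]_p) : R := frob v.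

Definition specnorm (p q : nat) (A : 'M[R]_(p, q)) : R :=
  sup [set enorm (A *m v) | v in [set v : 'cV[R]_q | enorm v <= 1]].

Definition wdist (p q L : nat) (W W0 : nat -> 'M[R]_(p, q)) : R :=
  Num.sqrt (\sum_(1 <= l < L.+1) \sum_(i < p) \sum_(j < q)
              ((W l - W0 l) i j) ^+ 2).

Definition sigma (lam x : R) : R :=
  ln (1 + expR (x - lam)) - ln (1 + expR (- x - lam)).

Definition sigmav (m : nat) (lam : R) (v : 'cV[R]_m) : 'cV[R]_m :=
  map_mx (sigma lam) v.

Definition xlayer (n m : nat) (W1 : 'M[R]_(m, n)) (W2 : 'M[R]_m)
  (y : 'cV[R]_n) (z u : 'cV[R]_m) : 'cV[R]_m :=
  (Num.sqrt n%:R)^-1 *: (W1 *m y) + (Num.sqrt m%:R)^-1 *: (W2 *m (z - u)).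

(* one ADMM-CSNet layer: (z^{l-1}, u^{l-1}) |-> (z^l, u^l) *)
Definition layer (n m : nat) (W1 : 'M[R]_(m, n)) (W2 : 'M[R]_m)
  (y : 'cV[R]_n) (lam : R) (zu : 'cV[R]_m * 'cV[R]_m) : 'cV[R]_m * 'cV[R]_m :=
  let x := xlayer W1 W2 y zu.1 zu.2 in
  let z' := sigmav lam (x + zu.2) in
  (z', zu.2 + x - z').

(* run_from l k st: starting from state (z^l, u^l), apply layers l+1, ..., l+k *)
Fixpoint run_from (n m : nat) (W1 : nat -> 'M[R]_(m, n)) (W2 : nat -> 'M[R]_m)
  (y : 'cV[R]_n) (lam : R) (l k : nat) (zu : 'cV[R]_m * 'cV[R]_m)
  : 'cV[R]_m * 'cV[R]_m :=
  match k with
  | 0 => zu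
  | k'.+1 => run_from W1 W2 y lam l.+1 k' (layer (W1 l.+1) (W2 l.+1) y lam zu)
  end.

Definition state (n m : nat) (W1 : nat -> 'M[R]_(m, n)) (W2 : nat -> 'M[R]_m)
  (y : 'cV[R]_n) (lam : R) (z0 u0 : 'cV[R]_m) (l : nat) :=
  run_from W1 W2 y lam 0 l (z0, u0).

(* f_s as a function of the node z^l of the computation graph (1 <= l <= L):
   z^l is replaced by zeta, and everything downstream is recomputed,
   i.e. u^l = u^{l-1} + x^l - zeta, then layers l+1..L, then f = z^L / sqrt m. *)
Definition f_from_z (n m L : nat) (W1 : nat -> 'M[R]_(m, n)) (W2 : nat -> 'M[R]_m)
  (y : 'cV[R]_n) (lam : R) (z0 u0 : 'cV[R]_m) (s : 'I_m) (l : nat)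
  (zeta : 'cV[R]_m) : R :=
  let prev := state W1 W2 y lam z0 u0 l.-1 in
  let x := xlayer (W1 l) (W2 l) y prev.1 prev.2 in
  let ul := prev.2 + x - zeta in
  ((Num.sqrt m%:R)^-1 *: (run_from W1 W2 y lam l (L - l) (zeta, ul)).1) s ord0.

(* b_s^l = d f_s / d z^l : the vector of partial derivatives at the actual z^l *)
Definition bvec (n m L : nat) (W1 : nat -> 'M[R]_(m, n)) (W2 : nat -> 'M[R]_m)
  (y : 'cV[R]_n) (lam : R) (z0 u0 : 'cV[R]_m) (s : 'I_m) (l : nat) : 'cV[R]_m :=
  \col_(j < m) 'D_(delta_mx j ord0 : 'cV[R]_m)
      (f_from_z L W1 W2 y lam z0 u0 s l) (state W1 W2 y lam z0 u0 l).1.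

End ADMM.

(* Main.v *)
Require Import Defs.
From HB Require Import structures.
From mathcomp Require Import all_boot all_order all_algebra.
From mathcomp Require Import all_classical all_reals all_analysis.
From mathcomp Require Import ring lra.
Import Order.TTheory GRing.Theory Num.Theory.
Import numFieldNormedType.Exports.
Local Open Scope classical_set_scope.
Local Open Scope ring_scope.

Lemma der_g {R : realType} (c lam x : R) :
  is_derive x 1 (fun t : R => ln (1 + expR (c * t - lam)))
    ((1 + expR (c * x - lam))^-1 * (expR (c * x - lam) * c)).
Proof.
have h1 : is_derive x 1 (fun t : R => c * t - lam) c.
  by apply: is_derive_eq; rewrite subr0 /GRing.scale /= mulr1.
have h2 : is_derive x 1 (expR \o (fun t : R => c * t - lam)) (expR (c * x - lam) * c).
  exact: is_derive1_comp.
have h3 : is_derive x 1 (cst 1 + (expR \o (fun t : R => c * t - lam))) (expR (c * x - lam) * c).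
  by apply: is_derive_eq; rewrite add0r.
have h4 : is_derive x 1 ((@ln R) \o (cst 1 + (expR \o (fun t : R => c * t - lam))))
   ((1 + expR (c * x - lam))^-1 * (expR (c * x - lam) * c)).
  apply: is_derive1_comp; apply: is_derive1_ln.
  by rewrite /= ltr_wpDr // expR_ge0.
exact: h4.
Qed.

Lemma sigma_der {R : realType} (lam x : R) :
  is_derive x 1 (sigma lam)
    ((1 + expR (1 * x - lam))^-1 * (expR (1 * x - lam) * 1) -
     (1 + expR (-1 * x - lam))^-1 * (expR (-1 * x - lam) * -1)).
Proof.
have e : sigma lam = (fun t : R => ln (1 + expR (1 * t - lam))) -
   (fun t : R => ln (1 + expR (-1 * t - lam))).
  apply/funext => t.
  change (sigma lam t = ln (1 + expR (1 * t - lam)) - ln (1 + expR (-1 * t - lam))).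
  by rewrite /sigma mul1r mulN1r.
rewrite e; apply: is_deriveB; exact: der_g.
Qed.

Lemma Lsig_ge1 {R : realType} (lam Lsig : R) :
  (forall x : R, `|derive1 (sigma lam) x| <= Lsig) -> 1 <= Lsig.
Proof.
move=> hL.
have L0 : 0 <= Lsig by apply: le_trans (hL 0); exact: normr_ge0.
rewrite leNgt; apply/negP => Llt1.
set E := 2 / (1 - Lsig).
have E0 : 0 < E by rewrite /E divr_gt0 // subr_gt0.
have := hL (ln E + lam).
have hd := sigma_der lam (ln E + lam).
rewrite derive1E derive_val.
rewrite mul1r addrK lnK ?posrE //.
set e2 := expR _.
have e20 : 0 <= e2 by exact: expR_ge0.
have hb : (1 + e2)^-1 * (e2 * -1) <= 0.
  by rewrite mulrN1 mulrN oppr_le0 mulr_ge0 // invr_ge0 addr_ge0.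
move=> h.
have ha : E / (1 + E) <= Lsig.
  apply: le_trans h; apply: le_trans (ler_norm _).
  rewrite mulr1 mulrC; rewrite lerDl oppr_ge0 //.
move: ha; rewrite ler_pdivrMr ?addr_gt0 //.
have h1L : 0 < 1 - Lsig by rewrite subr_gt0.
have hE : E * (1 - Lsig) = 2 by rewrite /E mulfVK ?gt_eqF.
move=> hh.
have : E * (1 - Lsig) <= Lsig * (1 + E) * (1 - Lsig) by rewrite ler_pM2r.
rewrite hE => hh2.
nra.
Qed.

Lemma sigma_mono {R : realType} (lam a b : R) : a <= b -> sigma lam a <= sigma lam b.
Proof.
move=> ab; rewrite /sigma; apply: lerB.
  rewrite ler_ln ?posrE ?addr_gt0 ?expR_gt0 // lerD2l ler_expR lerD2r //.
rewrite ler_ln ?posrE ?addr_gt0 ?expR_gt0 // lerD2l ler_expR lerD2r lerN2 //.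
Qed.

Lemma sigma_lip {R : realType} (lam a b : R) : 0 < lam -> a <= b ->
  sigma lam b - sigma lam a <= b - a.
Proof.
move=> l0 ab; rewrite /sigma.
set A := expR a; set B := expR b; set k := expR (- lam).
have A0 : 0 < A by exact: expR_gt0.
have B0 : 0 < B by exact: expR_gt0.
have k0 : 0 < k by exact: expR_gt0.
have k1 : k < 1 by rewrite /k expR_lt1 oppr_lt0.
have AB : A <= B by rewrite /A /B ler_expR.
have e1 : forall x, expR (x - lam) = expR x * k by move=> x; rewrite expRD.
have e2 : forall x, expR (- x - lam) = (expR x)^-1 * k by move=> x; rewrite expRD expRN.
rewrite !e2 !e1 -/A -/B.
have -> : b - a = ln B - ln A by rewrite /A /B !expRK.
have P1 : 0 < 1 + B * k by rewrite addr_gt0 // mulr_gt0.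
have P2 : 0 < 1 + B^-1 * k by rewrite addr_gt0 // mulr_gt0 // invr_gt0.
have P3 : 0 < 1 + A * k by rewrite addr_gt0 // mulr_gt0.
have P4 : 0 < 1 + A^-1 * k by rewrite addr_gt0 // mulr_gt0 // invr_gt0.
suff : ln (1 + B * k) + ln (1 + A^-1 * k) + ln A <=
       ln B + ln (1 + A * k) + ln (1 + B^-1 * k) by move=> h; lra.
rewrite -!lnM ?posrE ?mulr_gt0 //.
rewrite ler_ln ?posrE ?mulr_gt0 //.
have -> : (1 + B * k) * (1 + A^-1 * k) * A = (1 + B * k) * (A + k).
  by field; rewrite gt_eqF.
have -> : B * (1 + A * k) * (1 + B^-1 * k) = (1 + A * k) * (B + k).
  by field; rewrite gt_eqF.
have h : 0 <= (B - A) * (1 - k * k).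
  apply: mulr_ge0; first by lra.
  nra.
nra.
Qed.

Lemma sigma_contr {R : realType} (lam a b : R) : 0 < lam ->
  `|sigma lam a - sigma lam b| <= `|a - b| /\
  `|(a - b) - (sigma lam a - sigma lam b)| <= `|a - b|.
Proof.
move=> l0.
have n1 : a - b <= `|a - b| by exact: ler_norm.
have n2 : b - a <= `|a - b| by rewrite distrC; exact: ler_norm.
rewrite !ler_norml.
have [ab|ba] := leP a b.
  have h1 := sigma_mono lam a b ab; have h2 := sigma_lip lam a b l0 ab.
  split; apply/andP; split; lra.
have ba' : b <= a by exact: ltW.
have h1 := sigma_mono lam b a ba'; have h2 := sigma_lip lam b a l0 ba'.
split; apply/andP; split; lra.
Qed.

Lemma CS {R : realType} n (a b : 'I_n -> R) :
  (\sum_i a i * b i) ^+ 2 <= (\sum_i a i ^+ 2) * (\sum_i b i ^+ 2).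
Proof.
have key : 0 <= \sum_i \sum_j (a i * b j - a j * b i) ^+ 2.
  by apply: sumr_ge0 => i _; apply: sumr_ge0 => j _; exact: sqr_ge0.
have E : forall i j, (a i * b j - a j * b i) ^+ 2 =
   a i ^+ 2 * b j ^+ 2 + a j ^+ 2 * b i ^+ 2 - 2 * (a i * b i * (a j * b j)).
  by move=> i j; ring.
have E2 : \sum_i \sum_j (a i * b j - a j * b i) ^+ 2 =
   \sum_i \sum_j (a i ^+ 2 * b j ^+ 2) + \sum_i \sum_j (a j ^+ 2 * b i ^+ 2)
   - 2 * \sum_i \sum_j (a i * b i * (a j * b j)).
  rewrite mulr_sumr -big_split -sumrB; apply: eq_bigr => i _.
  by rewrite mulr_sumr -big_split -sumrB; apply: eq_bigr => j _; rewrite E.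
have E3 : \sum_i \sum_j (a i ^+ 2 * b j ^+ 2) = (\sum_i a i ^+ 2) * (\sum_i b i ^+ 2).
  by rewrite mulr_suml; apply: eq_bigr => i _; rewrite mulr_sumr.
have E4 : \sum_i \sum_j (a j ^+ 2 * b i ^+ 2) = (\sum_i a i ^+ 2) * (\sum_i b i ^+ 2).
  by rewrite exchange_big /=.
have E5 : \sum_i \sum_j (a i * b i * (a j * b j)) = (\sum_i a i * b i) ^+ 2.
  by rewrite expr2 mulr_suml; apply: eq_bigr => i _; rewrite mulr_sumr.
move: key; rewrite E2 E3 E4 E5 => key.
lra.
Qed.

Lemma enormE {R : realType} m (v : 'cV[R]_m) :
  enorm v = Num.sqrt (\sum_i v i ord0 ^+ 2).
Proof. by rewrite /enorm /frob; congr Num.sqrt; apply: eq_bigr => i _; rewrite big_ord1. Qed.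

Lemma enorm_ge0 {R : realType} m (v : 'cV[R]_m) : 0 <= enorm v.
Proof. exact: sqrtr_ge0. Qed.

Lemma frob_ge0 {R : realType} m p (v : 'M[R]_(m,p)) : 0 <= frob v.
Proof. exact: sqrtr_ge0. Qed.

Lemma sqrt_le_sq {R : realType} (x y : R) : 0 <= y -> x <= y ^+ 2 -> Num.sqrt x <= y.
Proof.
move=> y0 h; rewrite -(ger0_norm y0) -sqrtr_sqr ler_sqrt //; exact: sqr_ge0.
Qed.

Lemma mulmx_enorm {R : realType} m p (W : 'M[R]_(m, p)) (v : 'cV[R]_p) :
  enorm (W *m v) <= frob W * enorm v.
Proof.
rewrite !enormE /frob -sqrtrM; last by apply: sumr_ge0 => i _; apply: sumr_ge0 => j _; exact: sqr_ge0.
rewrite ler_sqrt; last first.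
  apply: mulr_ge0; apply: sumr_ge0 => i _; last exact: sqr_ge0.
  apply: sumr_ge0 => j _; exact: sqr_ge0.
rewrite mulr_suml; apply: ler_sum => i _; rewrite mxE; exact: CS.
Qed.

Lemma enormD {R : realType} m (a b : 'cV[R]_m) : enorm (a + b) <= enorm a + enorm b.
Proof.
rewrite !enormE; apply: sqrt_le_sq; first by rewrite addr_ge0 // sqrtr_ge0.
have cs := CS _ (fun i => a i ord0) (fun i => b i ord0).
set SA := \sum_i a i ord0 ^+ 2; set SB := \sum_i b i ord0 ^+ 2.
have SA0 : 0 <= SA by apply: sumr_ge0 => i _; exact: sqr_ge0.
have SB0 : 0 <= SB by apply: sumr_ge0 => i _; exact: sqr_ge0.
set C := \sum_i a i ord0 * b i ord0 in cs.
have -> : \sum_i (a + b) i ord0 ^+ 2 = SA + SB + 2 * C.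
  rewrite /SA /SB /C mulr_sumr -!big_split; apply: eq_bigr => i _ /=.
  rewrite mxE; ring.
have hC : C <= Num.sqrt SA * Num.sqrt SB.
  rewrite -sqrtrM //; apply: le_trans (ler_norm C) _.
  by rewrite -sqrtr_sqr ler_sqrt // mulr_ge0.
rewrite sqrrD !sqr_sqrtr //; lra.
Qed.

Lemma enormZ {R : realType} m (k : R) (a : 'cV[R]_m) : enorm (k *: a) = `|k| * enorm a.
Proof.
rewrite !enormE -sqrtr_sqr -sqrtrM ?sqr_ge0 //; congr Num.sqrt.
by rewrite mulr_sumr; apply: eq_bigr => i _; rewrite mxE exprMn.
Qed.

Lemma enormN {R : realType} m (a : 'cV[R]_m) : enorm (- a) = enorm a.
Proof. by rewrite -scaleN1r enormZ normrN normr1 mul1r. Qed.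

Lemma enormB {R : realType} m (a b : 'cV[R]_m) : enorm (a - b) <= enorm a + enorm b.
Proof. by have := enormD _ a (- b); rewrite enormN. Qed.

Lemma coord_le_enorm {R : realType} m (a : 'cV[R]_m) i : `|a i ord0| <= enorm a.
Proof.
rewrite enormE -sqrtr_sqr ler_sqrt; last by apply: sumr_ge0 => j _; exact: sqr_ge0.
rewrite (bigD1 i) //= lerDl; apply: sumr_ge0 => j _; exact: sqr_ge0.
Qed.

Lemma enorm_dom {R : realType} m (a b : 'cV[R]_m) :
  (forall i, `|a i ord0| <= `|b i ord0|) -> enorm a <= enorm b.
Proof.
move=> h; rewrite !enormE ler_sqrt; last by apply: sumr_ge0 => j _; exact: sqr_ge0.
apply: ler_sum => i _.
rewrite -(real_normK (num_real (a i ord0))) -(real_normK (num_real (b i ord0))).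
have := h i; have := normr_ge0 (a i ord0); nra.
Qed.

Lemma enorm0 {R : realType} m : enorm (0 : 'cV[R]_m) = 0.
Proof. by rewrite enormE big1 ?sqrtr0 // => i _; rewrite mxE expr0n. Qed.

Lemma spec_bound {R : realType} m p (W : 'M[R]_(m, p)) (v : 'cV[R]_p) :
  enorm (W *m v) <= specnorm W * enorm v.
Proof.
have hs : has_sup [set enorm (W *m v) | v in [set v : 'cV[R]_p | enorm v <= 1]].
  split.
    exists (enorm (W *m 0)); exists 0 => //=; by rewrite enorm0.
  exists (frob W) => _ [u /= hu <-].
  apply: le_trans (mulmx_enorm _ _ W u) _.
  by rewrite ler_piMr ?frob_ge0.
have [e0|epos] := eqVneq (enorm v) 0.
  by have := mulmx_enorm _ _ W v; rewrite e0 !mulr0.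
have ep : 0 < enorm v by rewrite lt_def epos enorm_ge0.
set w := (enorm v)^-1 *: v.
have hw : enorm w = 1 by rewrite /w enormZ ger0_norm ?invr_ge0 ?enorm_ge0 // mulVf.
have hin : [set enorm (W *m u) | u in [set u : 'cV[R]_p | enorm u <= 1]] (enorm (W *m w)).
  by exists w => //=; rewrite hw.
have := sup_upper_bound hs hin.
rewrite /specnorm /w -scalemxAr enormZ ger0_norm ?invr_ge0 ?enorm_ge0 //.
by rewrite ler_pdivrMl // mulrC.
Qed.

Lemma frob_le_wdist {R : realType} p q L (W W0 : nat -> 'M[R]_(p, q)) k :
  (1 <= k <= L)%N -> frob (W k - W0 k) <= wdist L W W0.
Proof.
move=> /andP[k1 kL]; rewrite /frob /wdist ler_sqrt; last first.
  by apply: sumr_ge0 => l _; apply: sumr_ge0 => i _; apply: sumr_ge0 => j _; exact: sqr_ge0.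
rewrite (bigD1_seq k) /=; first last.
- exact: iota_uniq.
- by rewrite mem_index_iota k1 ltnS.
rewrite lerDl; apply: sumr_ge0 => l _; apply: sumr_ge0 => i _; apply: sumr_ge0 => j _.
exact: sqr_ge0.
Qed.

Lemma W2_bound {R : realType} m L (W2 W20 : nat -> 'M[R]_m) (R2 c : R) k
  (v : 'cV[R]_m) :
  (1 <= k <= L)%N -> specnorm (W20 k) <= c -> wdist L W2 W20 <= R2 ->
  enorm (W2 k *m v) <= (c + R2) * enorm v.
Proof.
move=> hk hc hR.
have -> : W2 k = W20 k + (W2 k - W20 k) by rewrite addrC subrK.
rewrite mulmxDl; apply: le_trans (enormD _ _ _) _.
rewrite mulrDl; apply: lerD.
  apply: le_trans (spec_bound _ _ _ _) _; apply: ler_wpM2r => //; exact: enorm_ge0.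
apply: le_trans (mulmx_enorm _ _ _ _) _; apply: ler_wpM2r; first exact: enorm_ge0.
exact: le_trans (frob_le_wdist _ _ _ _ _ _ hk) hR.
Qed.

Definition Md {R : realType} {m} (p q : 'cV[R]_m * 'cV[R]_m) : R :=
  Num.max (enorm (p.1 - q.1)) (enorm (p.2 - q.2)).

Lemma Md_ge0 {R : realType} {m} (p q : 'cV[R]_m * 'cV[R]_m) : 0 <= Md p q.
Proof. by rewrite /Md le_max enorm_ge0. Qed.

Lemma layer_lip {R : realType} {n m} (W1 : 'M[R]_(m, n)) (W2 : 'M[R]_m) y lam C
  (p q : 'cV[R]_m * 'cV[R]_m) :
  0 < lam -> 0 <= C ->
  (forall v, enorm (W2 *m v) <= C * enorm v) ->
  Md (layer W1 W2 y lam p) (layer W1 W2 y lam q) <=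
  (2 * (C / Num.sqrt m%:R) + 1) * Md p q.
Proof.
move=> l0 C0 hW.
set P := xlayer W1 W2 y p.1 p.2 + p.2.
set Q := xlayer W1 W2 y q.1 q.2 + q.2.
set sm := (Num.sqrt m%:R)^-1.
have sm0 : 0 <= sm by rewrite /sm invr_ge0 sqrtr_ge0.
have e1 : xlayer W1 W2 y p.1 p.2 - xlayer W1 W2 y q.1 q.2 =
   sm *: (W2 *m ((p.1 - q.1) - (p.2 - q.2))).
  have -> : (p.1 - q.1) - (p.2 - q.2) = (p.1 - p.2) - (q.1 - q.2).
    by rewrite !opprD addrACA.
  by rewrite /xlayer opprD addrACA subrr add0r -scalerBr -mulmxBr.
have hd : P - Q = sm *: (W2 *m ((p.1 - q.1) - (p.2 - q.2))) + (p.2 - q.2).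
  by rewrite /P /Q opprD addrACA e1.
have M1 : enorm (p.1 - q.1) <= Md p q by rewrite /Md le_max lexx.
have M2 : enorm (p.2 - q.2) <= Md p q by rewrite /Md le_max lexx orbT.
have hdn : enorm (P - Q) <= (2 * (C / Num.sqrt m%:R) + 1) * Md p q.
  rewrite hd; apply: le_trans (enormD _ _ _) _.
  rewrite enormZ ger0_norm //.
  have h3 := hW ((p.1 - q.1) - (p.2 - q.2)).
  have h4 := enormB _ (p.1 - q.1) (p.2 - q.2).
  have h5 : sm * enorm (W2 *m (p.1 - q.1 - (p.2 - q.2))) <= sm * (C * (2 * Md p q)).
    apply: ler_wpM2l => //; apply: le_trans h3 _; apply: ler_wpM2l => //; lra.
  rewrite /sm in h5 *.
  set K := (Num.sqrt m%:R)^-1 in h5 *.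
  rewrite mulrDl mul1r; apply: lerD; last exact: M2.
  apply: le_trans h5 _; rewrite /K le_eqVlt; apply/orP; left; apply/eqP; ring.
rewrite /Md /layer /= -/P -/Q.
have -> : p.2 + xlayer W1 W2 y p.1 p.2 = P by rewrite addrC.
have -> : q.2 + xlayer W1 W2 y q.1 q.2 = Q by rewrite addrC.
clearbody P Q.
rewrite ge_max; apply/andP; split; apply: le_trans hdn;
  apply: enorm_dom => i; have [c1 c2] := sigma_contr lam (P i ord0) (Q i ord0) l0;
  rewrite !mxE; first exact: c1.
have -> : forall a b c d : R, a - b - (c - d) = (a - c) - (b - d) by move=> *; ring.
exact: c2.
Qed.

Lemma run_lip {R : realType} {n m} (W1 : nat -> 'M[R]_(m, n)) (W2 : nat -> 'M[R]_m)
  y lam C k : 0 < lam -> 0 <= C ->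
  forall l (p q : 'cV[R]_m * 'cV[R]_m),
  (forall j, (l < j <= l + k)%N -> forall v, enorm (W2 j *m v) <= C * enorm v) ->
  Md (run_from W1 W2 y lam l k p) (run_from W1 W2 y lam l k q) <=
  (2 * (C / Num.sqrt m%:R) + 1) ^+ k * Md p q.
Proof.
move=> l0 C0; elim: k => [|k IH] l p q hW /=.
  by rewrite expr0 mul1r.
apply: le_trans (IH _ _ _ _) _.
  by move=> j /andP[h1 h2]; apply: hW; rewrite addnS -addSn h2 andbT; apply: ltn_trans h1.
rewrite exprSr -mulrA; apply: ler_wpM2l.
  by apply: exprn_ge0; apply: addr_ge0 => //; apply: mulr_ge0 => //; apply: divr_ge0 => //; exact: sqrtr_ge0.
apply: layer_lip => //; apply: hW.
by rewrite ltnSn /= addnS ltnS leq_addr.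
Qed.

Lemma f_lip {R : realType} {n m} L (W1 : nat -> 'M[R]_(m, n)) (W2 : nat -> 'M[R]_m)
  y lam z0 u0 s l C (a b : 'cV[R]_m) : 0 < lam -> 0 <= C ->
  (forall j, (l < j <= l + (L - l))%N -> forall v, enorm (W2 j *m v) <= C * enorm v) ->
  `|f_from_z L W1 W2 y lam z0 u0 s l a - f_from_z L W1 W2 y lam z0 u0 s l b| <=
  (Num.sqrt m%:R)^-1 * (2 * (C / Num.sqrt m%:R) + 1) ^+ (L - l) * enorm (a - b).
Proof.
move=> l0 C0 hW; rewrite /f_from_z /=.
set c := _ + xlayer _ _ _ _ _.
rewrite !mxE -mulrBr normrM ger0_norm ?invr_ge0 ?sqrtr_ge0 // -mulrA.
apply: ler_wpM2l; first by rewrite invr_ge0 sqrtr_ge0.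
have h := run_lip W1 W2 y lam C (L - l) l0 C0 l (a, c - a) (b, c - b) hW.
apply: le_trans (le_trans _ h) _.
  set p1 := run_from _ _ _ _ _ _ _; set p2 := run_from _ _ _ _ _ _ _.
  apply: le_trans (_ : enorm (p1.1 - p2.1) <= _).
    by have := coord_le_enorm _ (p1.1 - p2.1) s; rewrite !mxE.
  by rewrite /Md le_max lexx.
apply: ler_wpM2l.
  by apply: exprn_ge0; apply: addr_ge0 => //; apply: mulr_ge0 => //; apply: divr_ge0 => //; exact: sqrtr_ge0.
rewrite /Md ge_max lexx /=.
have -> : c - a - (c - b) = - (a - b) by rewrite opprB addrC addrA subrK opprB.
by rewrite enormN lexx.
Qed.

Lemma D_bound {R : realType} {m} (f : 'cV[R]_m -> R) (a b : 'cV[R]_m) K :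
  differentiable f a -> (forall w, `|f w - f a| <= K * enorm (w - a)) ->
  `|'D_b f a| <= K * enorm b.
Proof.
move=> df hL.
have hd : derivable f a b := diff_derivable df.
have cv : (fun h : R => h^-1 *: ((f \o shift a) (h *: b) - f a)) @ 0^' --> 'D_b f a := hd.
have ev : \forall h \near 0^', `|h^-1 *: ((f \o shift a) (h *: b) - f a)| <= K * enorm b.
  near=> h.
  have hn0 : h != 0 by near: h; exact: nbhs_dnbhs_neq.
  rewrite /= normrZ normfV.
  have := hL (h *: b + a); rewrite addrK enormZ => hh.
  rewrite ler_pdivrMl ?normr_gt0 //; apply: le_trans hh _.
  by rewrite mulrCA.
rewrite ler_norml; apply/andP; split.
  apply: (closed_cvg (fun x => - (K * enorm b) <= x) (@closed_ge _ _) _ _ cv).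
  by apply: filterS ev => h /=; rewrite ler_norml => /andP[].
apply: (closed_cvg (fun x => x <= K * enorm b) (@closed_le _ _) _ _ cv).
by apply: filterS ev => h /=; rewrite ler_norml => /andP[].
Unshelve. all: by end_near.
Qed.

Lemma grad_bound {R : realType} {m} (f : 'cV[R]_m -> R) (a : 'cV[R]_m) K :
  0 <= K -> differentiable f a ->
  (forall w, `|f w - f a| <= K * enorm (w - a)) ->
  enorm (\col_j 'D_(delta_mx j ord0 : 'cV[R]_m) f a) <= K.
Proof.
move=> K0 df hL.
set b := \col_j _.
have hb : \sum_i b i ord0 ^+ 2 = 'D_b f a.
  rewrite deriveE // {2}(matrix_sum_delta b) linear_sum /=.
  apply: eq_bigr => i _; rewrite big_ord1 linearZ /= expr2; congr (_ * _).
  by rewrite /b mxE deriveE.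
have hB := D_bound f a b K df hL.
have s0 : 0 <= \sum_i b i ord0 ^+ 2 by apply: sumr_ge0 => i _; exact: sqr_ge0.
have e2 : enorm b ^+ 2 = 'D_b f a by rewrite enormE sqr_sqrtr.
have hle : enorm b ^+ 2 <= K * enorm b by rewrite e2; apply: le_trans (ler_norm _) hB.
have [e0|epos] := eqVneq (enorm b) 0; first by rewrite e0.
have ep : 0 < enorm b by rewrite lt_def epos enorm_ge0.
by move: hle; rewrite expr2 ler_pM2r.
Qed.

Lemma sigma_diff {R : realType} (lam x : R) : differentiable (sigma lam) x.
Proof. by apply/derivable1_diffP; case: (sigma_der lam x). Qed.

Lemma dcst {R : realType} {m} (c : R) (a : 'cV[R]_m) : differentiable (fun _ : 'cV[R]_m => c) a.
Proof. exact: differentiable_cst. Qed.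

Lemma dD {R : realType} {m} (g h : 'cV[R]_m -> R) a : differentiable g a -> differentiable h a ->
  differentiable (fun x => g x + h x) a.
Proof. exact: differentiableD. Qed.

Lemma dB {R : realType} {m} (g h : 'cV[R]_m -> R) a : differentiable g a -> differentiable h a ->
  differentiable (fun x => g x - h x) a.
Proof. exact: differentiableB. Qed.

Lemma dMc {R : realType} {m} (c : R) (g : 'cV[R]_m -> R) a : differentiable g a ->
  differentiable (fun x => c * g x) a.
Proof. by move=> dg; apply: (differentiableM (dcst c a) dg). Qed.

Lemma dsum {R : realType} {m} k (F : 'I_k -> 'cV[R]_m -> R) a :
  (forall i, differentiable (F i) a) -> differentiable (fun x => \sum_i F i x) a.
Proof.
move=> h; have -> : (fun x => \sum_i F i x) = \sum_i F i by rewrite fct_sumE.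
exact: differentiable_sum.
Qed.

Lemma dsig {R : realType} {m} lam (g : 'cV[R]_m -> R) a : differentiable g a ->
  differentiable (fun x => sigma lam (g x)) a.
Proof.
move=> dg; apply: (@differentiable_comp _ _ _ _ g (sigma lam)) => //.
exact: sigma_diff.
Qed.

Definition CD {R : realType} {m} (G : 'cV[R]_m -> 'cV[R]_m * 'cV[R]_m) (a : 'cV[R]_m) :=
  forall i j, differentiable (fun x => (G x).1 i j) a /\
              differentiable (fun x => (G x).2 i j) a.

Lemma layer_CD {R : realType} {n m} (W1 : 'M[R]_(m, n)) (W2 : 'M[R]_m) y lam
  (G : 'cV[R]_m -> 'cV[R]_m * 'cV[R]_m) a :
  CD G a -> CD (fun x => layer W1 W2 y lam (G x)) a.
Proof.
move=> hG i j.
have dX : differentiable (fun x => (xlayer W1 W2 y (G x).1 (G x).2) i j) a.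
  have -> : (fun x => (xlayer W1 W2 y (G x).1 (G x).2) i j) =
     (fun x => ((Num.sqrt n%:R)^-1 *: (W1 *m y)) i j + (Num.sqrt m%:R)^-1 *
        \sum_k (W2 i k * ((G x).1 k j - (G x).2 k j))).
    apply/funext => x; rewrite /xlayer mxE [in X in _ + X]mxE; congr (_ + _ * _).
    by rewrite mxE; apply: eq_bigr => k _; rewrite !mxE.
  apply: dD; first exact: dcst.
  apply: dMc; apply: dsum => k; apply: dMc; apply: dB; [exact: (hG k j).1 | exact: (hG k j).2].
have dP : differentiable (fun x => (xlayer W1 W2 y (G x).1 (G x).2) i j + (G x).2 i j) a.
  by apply: dD => //; exact: (hG i j).2.
split.
  have -> : (fun x => (layer W1 W2 y lam (G x)).1 i j) =
     (fun x => sigma lam ((xlayer W1 W2 y (G x).1 (G x).2) i j + (G x).2 i j)).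
    by apply/funext => x; rewrite /layer /= !mxE.
  exact: dsig.
have -> : (fun x => (layer W1 W2 y lam (G x)).2 i j) =
   (fun x => ((G x).2 i j + (xlayer W1 W2 y (G x).1 (G x).2) i j) -
      sigma lam ((xlayer W1 W2 y (G x).1 (G x).2) i j + (G x).2 i j)).
  by apply/funext => x; rewrite /layer /= !mxE.
apply: dB; last exact: dsig.
by apply: dD => //; exact: (hG i j).2.
Qed.

Lemma run_CD {R : realType} {n m} (W1 : nat -> 'M[R]_(m, n)) (W2 : nat -> 'M[R]_m)
  y lam k a : forall l (G : 'cV[R]_m -> 'cV[R]_m * 'cV[R]_m),
  CD G a -> CD (fun x => run_from W1 W2 y lam l k (G x)) a.
Proof.
elim: k => [|k IH] l G hG //=.
exact: (IH l.+1 (fun x => layer (W1 l.+1) (W2 l.+1) y lam (G x)) (layer_CD _ _ _ _ _ _ hG)).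
Qed.

Lemma f_diff {R : realType} {n m} L (W1 : nat -> 'M[R]_(m, n)) (W2 : nat -> 'M[R]_m)
  y lam z0 u0 s l a : differentiable (f_from_z L W1 W2 y lam z0 u0 s l) a.
Proof.
rewrite /f_from_z /=.
set c := _ + xlayer _ _ _ _ _.
have hG : CD (fun x : 'cV[R]_m => (x, c - x)) a.
  move=> i j /=; split; first exact: differentiable_coord.
  have -> : (fun x : 'cV[R]_m => (c - x) i j) = (fun x => c i j - x i j).
    by apply/funext => x; rewrite !mxE.
  apply: dB; [exact: dcst | exact: differentiable_coord].
have [h1 _] := run_CD W1 W2 y lam (L - l) a l _ hG s ord0.
have -> : (fun zeta : 'cV[R]_m =>
   ((Num.sqrt m%:R)^-1 *: (run_from W1 W2 y lam l (L - l) (zeta, c - zeta)).1) s ord0) =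
   (fun x => (Num.sqrt m%:R)^-1 * (run_from W1 W2 y lam l (L - l) (x, c - x)).1 s ord0).
  by apply/funext => x; rewrite mxE.
exact: dMc.
Qed.

Lemma sqrt_ge1 {R : realType} m : (0 < m)%N -> 1 <= Num.sqrt (m%:R : R).
Proof. move=> hm. have h := ler_sqrt (1 : R) (ler0n _ m). rewrite sqrtr1 in h. by rewrite h ler1n. Qed.

Local Close Scope classical_set_scope.

Theorem lemma10 (R : realType) (n m L : nat) (lam Lsig : R)
  (hn : (0 < n)%N) (hm : (0 < m)%N) (hL : (0 < L)%N) (hlam : 0 < lam)
  (hLsig : forall x : R, `|derive1 (sigma lam) x| <= Lsig)
  (y : 'cV[R]_n) (z0 u0 : 'cV[R]_m)
  (W10 : nat -> 'M[R]_(m, n)) (W20 : nat -> 'M[R]_m)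
  (hW20 : forall l : nat, (1 <= l <= L)%N ->
     specnorm (W20 l) <= 3 * Num.sqrt m%:R) :
  (forall (R1 R2 : R) (W1 : nat -> 'M[R]_(m, n)) (W2 : nat -> 'M[R]_m),
     wdist L W1 W10 <= R1 -> wdist L W2 W20 <= R2 ->
     forall (s : 'I_m) (l : nat), (1 <= l <= L)%N ->
       enorm (bvec L W1 W2 y lam z0 u0 s l)
         <= Lsig ^+ (L - l) * (2 * (3 + R2 / Num.sqrt m%:R) + 1) ^+ (L - l))
  /\
  (forall (s : 'I_m) (l : nat), (1 <= l <= L)%N ->
     enorm (bvec L W10 W20 y lam z0 u0 s l)
       <= Lsig ^+ (L - l) * (2 * 3 + 1) ^+ (L - l)).
Proof.
have L1 := Lsig_ge1 lam Lsig hLsig.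
have sm1 : 1 <= Num.sqrt (m%:R : R).
  exact: sqrt_ge1.
have sm0 : 0 < Num.sqrt (m%:R : R) by apply: lt_le_trans sm1.
have part1 : forall (R1 R2 : R) (W1 : nat -> 'M[R]_(m, n)) (W2 : nat -> 'M[R]_m),
     wdist L W1 W10 <= R1 -> wdist L W2 W20 <= R2 ->
     forall (s : 'I_m) (l : nat), (1 <= l <= L)%N ->
       enorm (bvec L W1 W2 y lam z0 u0 s l)
         <= Lsig ^+ (L - l) * (2 * (3 + R2 / Num.sqrt m%:R) + 1) ^+ (L - l).
  move=> R1 R2 W1 W2 _ hd2 s l /andP[l1 lL].
  have R20 : 0 <= R2 by apply: le_trans hd2; exact: sqrtr_ge0.
  set C := 3 * Num.sqrt m%:R + R2.
  have C0 : 0 <= C by rewrite addr_ge0 // mulr_ge0 // ltW.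
  have hW : forall j, (l < j <= l + (L - l))%N ->
      forall v, enorm (W2 j *m v) <= C * enorm v.
    move=> j /andP[j1 j2] v.
    have hj : (1 <= j <= L)%N.
      by rewrite (leq_trans l1 (ltnW j1)) /=; rewrite subnKC in j2.
    exact: (W2_bound m L W2 W20 R2 (3 * Num.sqrt (m%:R : R)) j v hj (hW20 j hj) hd2).
  set B := (2 * (C / Num.sqrt m%:R) + 1) ^+ (L - l).
  have B0 : 0 <= B.
    by apply: exprn_ge0; apply: addr_ge0 => //; apply: mulr_ge0 => //; apply: divr_ge0 => //; exact: ltW.
  have K0 : 0 <= (Num.sqrt m%:R)^-1 * B by rewrite mulr_ge0 // invr_ge0 ltW.
  rewrite /bvec; apply: le_trans (grad_bound (f_from_z L W1 W2 y lam z0 u0 s l) _ _ K0 (f_diff _ _ _ _ _ _ _ _ _ _) _) _.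
    move=> w; exact: (f_lip _ _ _ _ _ _ _ _ _ _ _ _ hlam C0 hW).
  have -> : 3 + R2 / Num.sqrt m%:R = C / Num.sqrt m%:R.
    by rewrite /C mulrDl mulfK ?gt_eqF.
  rewrite -/B; apply: (@le_trans _ _ B).
    by rewrite ler_piMl // invr_le1 // unitfE gt_eqF.
  by rewrite ler_peMl // exprn_ege1.
split; first exact: part1.
move=> s l hl.
have h0 : wdist L W20 W20 <= 0.
  rewrite /wdist big1 ?sqrtr0 // => k _; rewrite big1 // => i _; rewrite big1 // => j _.
  by rewrite subrr mxE expr0n.
have := part1 _ _ W10 W20 (lexx _) h0 s l hl.
by rewrite mul0r addr0.
Qed.
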